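(* There exist $d\ge1$, a partition of $\{1,\dots,d\}$ into sets $\mathcal{D},\mathcal{U}$, a causal graph with contribution matrix $\mathbb{C}$, cost weights $c\in\mathbb{R}^d$ with $c_f>0$, an exponent $p\ge1$, a deficit $\alpha>0$ and $\beta\in(0,1)$ such that the set $$\mathcal{H}=\{h_0\in\mathbb{R}^d:\ \mathbb{C}h_0\ge0\ \text{and every optimal solution of } \min_{e\ge0}\Big(\sum_f c_fe_f^{\,p}\Big)^{1/p}\ \text{s.t.}\ (\mathbb{C}h_0)^\top e\ge\alpha\ \text{is }\beta\text{-desirable}\}$$ of $\beta$-desirable classifiers is not convex.
   Context: A causal graph is a weighted directed acyclic graph on $\{1,\dots,d\}$ with adjacency matrix $A$ ($A_{ij}$ the weight of edge $i\to j$, $0$ if absent); its contribution matrix is $\mathbb{C}=\sum_{k=0}^{d}A^k$. $\mathcal{D}$ is the set of desirable features and $\mathcal{U}$ the set of undesirable features. An effort profile $e$ is $\beta$-desirable if $\|e_{\mathcal{D}}\|_2\ge\beta\|e\|_2$, where $e_{\mathcal{D}}$ is the restriction of $e$ to coordinates in $\mathcal{D}$. *)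

(* Defs.v *)
From HB Require Import structures.
From mathcomp Require Import all_boot all_order all_algebra.
From mathcomp Require Import reals exp Rstruct.
From Stdlib Require Import Rdefinitions.
Set Implicit Arguments. Unset Strict Implicit. Unset Printing Implicit Defensive.
Import Order.TTheory GRing.Theory Num.Theory.
Local Open Scope ring_scope.

Definition Rr : realType := Rdefinitions.R.

Definition edge d (A : 'M[Rr]_d) : rel 'I_d := fun i j => A i j != 0.

Definition acyclic d (A : 'M[Rr]_d) : Prop :=
  forall (x : 'I_d) (s : seq 'I_d), path (edge A) x s -> last x s = x -> s = [::].

Definition contribution d (A : 'M[Rr]_d) : 'M[Rr]_d :=
  \sum_(k < d.+1) A ^+ k.

Definition norm2_on d (S : {set 'I_d}) (e : 'cV[Rr]_d) : Rr :=
  Num.sqrt (\sum_(i in S) e i 0 ^+ 2).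
Definition norm2 d (e : 'cV[Rr]_d) : Rr := Num.sqrt (\sum_i e i 0 ^+ 2).

Definition desirable d (D : {set 'I_d}) (beta : Rr) (e : 'cV[Rr]_d) : Prop :=
  norm2_on D e >= beta * norm2 e.

Definition cost d (c : 'I_d -> Rr) (p : Rr) (e : 'cV[Rr]_d) : Rr :=
  powR (\sum_f c f * powR (e f 0) p) p^-1.

Definition feasible d (C : 'M[Rr]_d) (alpha : Rr) (h0 e : 'cV[Rr]_d) : Prop :=
  (forall f, 0 <= e f 0) /\ alpha <= \sum_f (C *m h0) f 0 * e f 0.

Definition optimal d (C : 'M[Rr]_d) (c : 'I_d -> Rr) (p alpha : Rr)
  (h0 e : 'cV[Rr]_d) : Prop :=
  feasible C alpha h0 e /\
  forall e', feasible C alpha h0 e' -> cost c p e <= cost c p e'.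

Definition Hset d (D : {set 'I_d}) (C : 'M[Rr]_d) (c : 'I_d -> Rr)
  (p alpha beta : Rr) (h0 : 'cV[Rr]_d) : Prop :=
  (forall f, 0 <= (C *m h0) f 0) /\
  forall e, optimal C c p alpha h0 e -> desirable D beta e.

Definition convex_pred d (P : 'cV[Rr]_d -> Prop) : Prop :=
  forall (x y : 'cV[Rr]_d) (t : Rr), P x -> P y -> 0 <= t <= 1 ->
    P (t *: x + (1 - t) *: y).

(* Main.v *)
Require Import Defs.
From HB Require Import structures.
From mathcomp Require Import all_boot all_order all_algebra.
From mathcomp Require Import reals exp Rstruct.
From mathcomp Require Import lra.
Import Order.TTheory GRing.Theory Num.Theory.
Local Open Scope ring_scope.

Definition i0 : 'I_3 := ord0.
Definition i1 : 'I_3 := Ordinal (isT : (1 < 3)%N).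
Definition i2 : 'I_3 := Ordinal (isT : (2 < 3)%N).

Definition v3 (a b c : Rr) : 'cV[Rr]_3 := \col_(i < 3) nth 0 [:: a; b; c] i.

Lemma sum3 (F : 'I_3 -> Rr) : \sum_(f < 3) F f = F i0 + F i1 + F i2.
Proof.
rewrite !big_ord_recl big_ord0 addr0 addrA.
by congr (_ + _ + _); congr F; apply: val_inj.
Qed.

Lemma v3E a b c : v3 a b c i0 0 = a /\ v3 a b c i1 0 = b /\ v3 a b c i2 0 = c.
Proof. by rewrite !mxE. Qed.

Lemma v3_ge0 a b c : 0 <= a -> 0 <= b -> 0 <= c -> forall f, 0 <= v3 a b c f 0.
Proof. by move=> ha hb hc [[|[|[|]]] //] ?; rewrite mxE. Qed.

Definition DD : {set 'I_3} := [set i | i != i2].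

Lemma sumD (F : 'I_3 -> Rr) : \sum_(i in DD) F i = F i0 + F i1.
Proof. by rewrite big_mkcond sum3 !inE /= addr0. Qed.

Lemma contrib0 : contribution (0 : 'M[Rr]_3) = 1.
Proof.
rewrite /contribution big_ord_recl expr0 big1 ?addr0 // => k _.
by rewrite expr0n.
Qed.

Lemma acyc0 : acyclic (0 : 'M[Rr]_3).
Proof. by move=> x [|y s] //= /andP[]; rewrite /edge mxE eqxx. Qed.

Lemma cost1 (e : 'cV[Rr]_3) : (forall f, 0 <= e f 0) ->
  cost (fun _ => 1) 1 e = (e i0 0) + (e i1 0) + (e i2 0).
Proof.
move=> he; rewrite /cost invr1 powRr1.
  by rewrite sum3 !mul1r !powRr1.
by apply: sumr_ge0 => f _; rewrite mul1r powRr1.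
Qed.

Lemma Cmul (h : 'cV[Rr]_3) f : (contribution 0 *m h) f 0 = h f 0.
Proof. by rewrite contrib0 mul1mx. Qed.

Lemma endpoint (a b : Rr) : (a = 2 /\ b = 0) \/ (a = 0 /\ b = 2) ->
  Hset DD (contribution 0) (fun _ => 1) 1 1 (1/2) (v3 a b 1).
Proof.
move=> hab; split.
  move=> f; rewrite Cmul; case: hab => [[-> ->]|[-> ->]]; apply: v3_ge0 => //.
move=> e [[he0 hfe] hopt].
have [va [vb vc]] := v3E a b 1.
have hfe' := hfe; rewrite sum3 !Cmul va vb vc in hfe'.
have e2z : (e i2 0) = 0.
  have h0 := he0 i0; have h1 := he0 i1; have h2 := he0 i2.
  case: hab => [[ea eb]|[ea eb]]; rewrite ea eb in hfe'.
  - have := hopt (v3 ((e i0 0) + (e i2 0) / 2) (e i1 0) 0).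
    have [wa [wb wc]] := v3E ((e i0 0) + (e i2 0) / 2) (e i1 0) 0.
    rewrite !cost1 ?wa ?wb ?wc //; last by apply: v3_ge0 => //; lra.
    move=> H; suff : (e i2 0) <= 0 by lra.
    have : (e i0 0) + (e i1 0) + (e i2 0) <= (e i0 0) + (e i2 0) / 2 + (e i1 0) + 0.
      apply: H; split; first by apply: v3_ge0 => //; lra.
      by rewrite sum3 !Cmul wa wb wc va vb vc ea eb; lra.
    lra.
  - have := hopt (v3 (e i0 0) ((e i1 0) + (e i2 0) / 2) 0).
    have [wa [wb wc]] := v3E (e i0 0) ((e i1 0) + (e i2 0) / 2) 0.
    rewrite !cost1 ?wa ?wb ?wc //; last by apply: v3_ge0 => //; lra.
    move=> H; suff : (e i2 0) <= 0 by lra.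
    have : (e i0 0) + (e i1 0) + (e i2 0) <= (e i0 0) + ((e i1 0) + (e i2 0) / 2) + 0.
      apply: H; split; first by apply: v3_ge0 => //; lra.
      by rewrite sum3 !Cmul wa wb wc va vb vc ea eb; lra.
    lra.
rewrite /desirable /norm2_on /norm2 sumD sum3 e2z expr0n /= addr0.
have := sqrtr_ge0 ((e i0 0) ^+ 2 + (e i1 0) ^+ 2); lra.
Qed.

Lemma midpoint_not :
  ~ Hset DD (contribution 0) (fun _ => 1) 1 1 (1/2)
      ((1/2) *: v3 2 0 1 + (1 - 1/2) *: v3 0 2 1).
Proof.
move=> [_ Hd].
have hE : forall i, ((1/2) *: v3 2 0 1 + (1 - 1/2) *: v3 0 2 1) i 0 = 1.
  by move=> [[|[|[|]]] //] ?; rewrite !mxE /=; lra.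
have [ua [ub uc]] := v3E 0 0 1.
have ge : forall f, 0 <= v3 0 0 1 f 0 by apply: v3_ge0.
have := Hd (v3 0 0 1); rewrite /desirable /norm2_on /norm2 sumD sum3 ua ub uc.
rewrite expr0n /= addr0 expr1n !add0r sqrtr0 sqrtr1.
move=> H; suff : (0:Rr) >= 1/2 * 1 by lra.
apply: H; split.
  split=> //; rewrite sum3 !Cmul !hE ua ub uc; lra.
move=> e' [he' hf']; rewrite !cost1 // ua ub uc.
rewrite sum3 !Cmul !hE in hf'; lra.
Qed.

Theorem lemma3 :
  exists (d : nat) (D : {set 'I_d}) (A : 'M[Rr]_d) (c : 'I_d -> Rr)
         (p alpha beta : Rr),
    (1 <= d)%N /\ D != set0 /\ ~: D != set0 /\ acyclic A /\
    (forall f, 0 < c f) /\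
    1 <= p /\ 0 < alpha /\ 0 < beta < 1 /\
    ~ convex_pred (Hset D (contribution A) c p alpha beta).
Proof.
exists 3%N, DD, 0, (fun _ => 1), 1, 1, (1/2).
split; first done.
split; first by apply/set0Pn; exists i0; rewrite !inE.
split; first by apply/set0Pn; exists i2; rewrite !inE eqxx.
split; first exact: acyc0.
split; first by move=> _; exact: ltr01.
split; first exact: lexx.
split; first exact: ltr01.
split; first by apply/andP; split; lra.
move=> Hc; apply: midpoint_not; apply: Hc.
- by apply: endpoint; left.
- by apply: endpoint; right.
- by apply/andP; split; lra.
Qed.
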